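(* Let $m\ge 1$. An abstract simplicial complex $\mathcal I$ on the vertex set $\{0,1\}^m$ is implementable (i.e. $\mathcal I=\mathcal I(f)$ for some implementable one-player allocation function $f:\mathbb R^m\to\{0,1\}^m$) if and only if there exists a regular subdivision $\mathcal S$ of the point set $\{0,1\}^m$ (of the cube $[0,1]^m$) such that the facets (inclusion-maximal faces) of $\mathcal I$ are precisely the vertex sets of the maximal cells of $\mathcal S$.
   Context: One-player setting with $m$ items: a type is $\theta\in\mathbb R^m$, an allocation is $a\in\{0,1\}^m$ (the characteristic vector of the received bundle). An allocation function is a map $f:\mathbb R^m\to\{0,1\}^m$. It is implementable (truthful/DSIC) if there is a payment function $p:\mathbb R^m\to\mathbb R$ with $\theta\cdot f(\theta)-p(\theta)\ge \theta\cdot f(\theta')-p(\theta')$ for all $\theta,\theta'\in\mathbb R^m$ (quasi-linear additive utilities). For $a\in\{0,1\}^m$ the difference set is $Q_a=\mathrm{cl}\{\theta: f(\theta)=a\}$ (topological closure). The indifference complex of $f$ is $\mathcal I(f)=\{\mathcal O\subseteq\{0,1\}^m : \bigcap_{a\in\mathcal O}Q_a\neq\emptyset\}$. A simplicial complex is implementable if it equals $\mathcal I(f)$ for some implementable $f$. Regular subdivision: for a finite point set $U\subset\mathbb R^m$ and a height function $\lambda:U\to\mathbb R$, project (forgetting the last coordinate) the upper faces (those with an outer normal having positive last coordinate) of $\mathrm{conv}\{(u,\lambda(u)):u\in U\}$; the resulting polytopal subdivision of $\mathrm{conv}(U)$ is the regular subdivision induced by $\lambda$. *)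

(* Defs.v *)
From HB Require Import structures.
From mathcomp Require Import all_boot all_order all_algebra.
From mathcomp Require Import reals.
Set Implicit Arguments. Unset Strict Implicit. Unset Printing Implicit Defensive.
Import Order.TTheory GRing.Theory Num.Theory.
Local Open Scope ring_scope.

Section Defs.
Variables (R : realType) (m : nat).

Definition alloc := {ffun 'I_m -> bool}.
Definition typ := 'I_m -> R.

Definition dotp (theta : typ) (a : alloc) : R :=
  \sum_(i < m) (if a i then theta i else 0).

Definition implementable (f : typ -> alloc) : Prop :=
  exists p : typ -> R, forall theta theta' : typ,
    dotp theta (f theta') - p theta' <= dotp theta (f theta) - p theta.

Definition in_closure (S : typ -> Prop) (theta : typ) : Prop :=
  forall e : R, 0 < e -> exists theta', S theta' /\ forall i, `|theta i - theta' i| < e.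

Definition diff_set (f : typ -> alloc) (a : alloc) : typ -> Prop :=
  in_closure (fun theta => f theta = a).

Definition indiff_complex (f : typ -> alloc) (O : {set alloc}) : Prop :=
  exists theta : typ, forall a, a \in O -> diff_set f a theta.

Definition simplicial_complex_on_cube (I : {set alloc} -> Prop) : Prop :=
  (forall O O' : {set alloc}, O' \subset O -> I O -> I O') /\
  (forall a : alloc, I [set a]).

Definition implementable_complex (I : {set alloc} -> Prop) : Prop :=
  exists f : typ -> alloc, implementable f /\
    forall O, I O <-> indiff_complex f O.

Definition facet (I : {set alloc} -> Prop) (O : {set alloc}) : Prop :=
  I O /\ forall O', I O' -> O \subset O' -> O' = O.

(* Regular subdivision of the point set {0,1}^m induced by heights lambda.
   An upper face of conv{(u, lambda u)} has an outer normal (c, t) with t > 0;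
   after scaling t = 1 its vertex set is the set of maximizers of
   c . u + lambda u over u in {0,1}^m.  Since every point of {0,1}^m is a
   vertex of the cube, the vertex set of the projected cell is exactly this
   maximizer set. *)
Definition upper_cell (lambda : alloc -> R) (c : typ) : {set alloc} :=
  [set u | [forall v, dotp c v + lambda v <= dotp c u + lambda u]].

Definition is_cell (lambda : alloc -> R) (S : {set alloc}) : Prop :=
  exists c : typ, S = upper_cell lambda c.

Definition maximal_cell (lambda : alloc -> R) (S : {set alloc}) : Prop :=
  is_cell lambda S /\ forall S', is_cell lambda S' -> S \subset S' -> S' = S.

End Defs.

(* Main.v *)
Require Import Defs.
From HB Require Import structures.
From mathcomp Require Import all_boot all_order all_algebra.
From mathcomp Require Import reals.
From mathcomp Require Import boolp zify ring lra.
Import Order.TTheory GRing.Theory Num.Theory.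
Local Open Scope ring_scope.

Lemma dotp_diff (R : realType) (m : nat) (th th' : typ R m) (v : alloc m) :
  dotp th' v - dotp th v = \sum_(i < m) (if v i then th' i - th i else 0).
Proof.
rewrite /dotp -sumrB; apply: eq_bigr => i _; case: (v i) => //; by rewrite subrr.
Qed.

Lemma cell_char (R : realType) (m : nat) (lam : alloc m -> R)
  (f : typ R m -> alloc m) :
  (forall th, f th \in upper_cell lam th) ->
  forall a th, diff_set f a th <-> a \in upper_cell lam th.
Proof.
move=> Hf0 a th; split.
- move=> Hcl; rewrite inE; apply/forallP => v.
  case: (lerP (dotp th v + lam v) (dotp th a + lam a)) => // Hlt; exfalso.
  set g := dotp th v + lam v - (dotp th a + lam a).
  have gpos : 0 < g by rewrite subr_gt0.
  set e := g / (m.+1)%:R.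
  have epos : 0 < e by rewrite divr_gt0 // ltr0n.
  have [th' [Hf Hclose]] := Hcl e epos.
  have Hfc := Hf0 th'; rewrite Hf inE in Hfc; have Hv := forallP Hfc v.
  have D : dotp th' a - dotp th a - (dotp th' v - dotp th v) <= e *+ m.
    rewrite !dotp_diff -sumrB.
    have -> : e *+ m = \sum_(i < m) e by rewrite sumr_const card_ord.
    apply: ler_sum => i _.
    move: (Hclose i); rewrite ltr_norml => /andP[h1 h2].
    case: (a i); case: (v i); lra.
  have He1 : e *+ m.+1 = g by rewrite -mulr_natr divfK // pnatr_eq0.
  have HS := mulrS e m.
  rewrite /g in He1; lra.
- move=> Ha e epos.
  pose t := e / 2.
  have tpos : 0 < t by rewrite /t; lra.
  pose th' := fun i => th i + (if a i then t else -t).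
  have Hd : forall i, th' i - th i = (if a i then t else -t).
    by move=> i; rewrite /th' addrAC subrr add0r.
  exists th'; split.
  + case: (eqVneq (f th') a) => // Hne; exfalso.
    set b := f th' in Hne.
    have Hb0 := Hf0 th'; rewrite inE in Hb0; have Hb := forallP Hb0 a; rewrite -/b in Hb.
    have Ha0 := Ha; rewrite inE in Ha0; have Hab := forallP Ha0 b.
    have [i0 Hi0] : exists i, b i != a i.
      case: (boolP [exists i, b i != a i]) => [/existsP//| /existsPn H].
      exfalso; move/eqP: Hne; apply; apply/ffunP => i; apply/eqP.
      by move: (H i); rewrite negbK.
    have P : 0 < dotp th' a - dotp th a - (dotp th' b - dotp th b).
      rewrite !dotp_diff -sumrB (bigD1 i0) //=.
      have S : 0 <= \sum_(i < m | i != i0)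
          ((if a i then th' i - th i else 0) - (if b i then th' i - th i else 0)).
        apply: sumr_ge0 => i _; rewrite Hd; case: (a i); case: (b i); lra.
      have T : 0 < (if a i0 then th' i0 - th i0 else 0) -
                   (if b i0 then th' i0 - th i0 else 0).
        rewrite Hd; move: Hi0; case: (a i0); case: (b i0) => //= _; lra.
      apply: (lt_le_trans T); rewrite lerDl; exact: S.
    lra.
  + move=> i; rewrite /th'.
    have -> : th i - (th i + (if a i then t else - t)) = - (if a i then t else - t)
      by ring.
    rewrite normrN; case: (a i); rewrite ?normrN ger0_norm ?ltW // /t; lra.
Qed.

Arguments cell_char {R m lam f}.

Lemma indiff_char (R : realType) (m : nat) (lam : alloc m -> R)
  (f : typ R m -> alloc m) :
  (forall th, f th \in upper_cell lam th) ->
  forall O, indiff_complex f O <-> exists c, O \subset upper_cell lam c.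
Proof.
move=> Hf0 O; split; case=> c H; exists c.
- by apply/subsetP => a Ha; rewrite -(cell_char Hf0); exact: H.
- by move=> a Ha; rewrite (cell_char Hf0); exact: (subsetP H a Ha).
Qed.

Arguments indiff_char {R m lam f}.

Lemma maxl (T : finType) (P : {set T} -> Prop) X :
  P X -> exists Y : {set T}, X \subset Y /\ P Y /\ forall Z, P Z -> Y \subset Z -> Z = Y.
Proof.
have stop : forall X : {set T}, P X -> ~ (exists Z, P Z /\ X \proper Z) ->
   exists Y : {set T}, X \subset Y /\ P Y /\ forall Z, P Z -> Y \subset Z -> Z = Y.
  move=> Y PY Hno; exists Y; split => //; split => // Z PZ YZ.
  case: (eqVneq Z Y) => // HZY; exfalso; apply: Hno; exists Z; split => //.
  by rewrite properEneq eq_sym HZY YZ.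
move: {2}(#|T| - #|X|)%N (leqnn (#|T| - #|X|)) => n.
elim: n X => [|n IH] X Hn PX;
  case: (pselect (exists Z, P Z /\ X \proper Z)) => [[Z [PZ XZ]]|Hno];
  try exact: stop.
- have h1 := proper_card XZ; have h2 := max_card Z; exfalso; lia.
- have h1 := proper_card XZ; have h2 := max_card Z.
  have [|Y [ZY [PY HY]]] := IH Z _ PZ; first lia.
  exists Y; split => //; exact: subset_trans (proper_sub XZ) ZY.
Qed.

Arguments maxl {T P X}.

Lemma comb (R : realType) (m : nat) (I : {set alloc m} -> Prop) (lam : alloc m -> R) :
  (forall O, I O <-> exists c, O \subset upper_cell lam c) ->
  forall O, facet I O <-> maximal_cell lam O.
Proof.
move=> HI O; split.
- move=> [IO Hmax].
  have [c Hc] := (HI O).1 IO.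
  have IC : I (upper_cell lam c) by apply/HI; exists c.
  have E := Hmax _ IC Hc.
  split; first by exists c.
  move=> S' [c' ->] HS; apply: Hmax => //; apply/HI; by exists c'.
- move=> [[c Ec] Hmax]; split; first by apply/HI; exists c; rewrite Ec.
  move=> O' IO' HO'.
  have [c' Hc'] := (HI O').1 IO'.
  have E := Hmax (upper_cell lam c') (ex_intro _ c' erefl) (subset_trans HO' Hc').
  apply/eqP; rewrite eqEsubset HO' andbT; by rewrite -E.
Qed.

Theorem theorem3p5 (R : realType) (m : nat) (I : {set alloc m} -> Prop) :
  (1 <= m)%N ->
  simplicial_complex_on_cube I ->
  (implementable_complex R I <->
   exists lambda : alloc m -> R,
     forall O : {set alloc m}, facet I O <-> maximal_cell lambda O).
Proof.
move=> _ [HIdown HIsing]; split.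
- case=> f [[p Hp] Hequiv].
  have Hsurj : forall a, exists th, f th = a.
    move=> a; have [th H] := (Hequiv [set a]).1 (HIsing a).
    have [th' [Hf _]] := H a (set11 a) 1 ltr01.
    by exists th'.
  have [g Hg] := choice Hsurj.
  pose lam := fun a => - p (g a).
  have Hp_eq : forall th th', f th = f th' -> p th = p th'.
    move=> th th' E; have h1 := Hp th th'; have h2 := Hp th' th.
    rewrite E in h1 h2; apply/eqP; rewrite eq_le; apply/andP; split; lra.
  have Hcell : forall th, f th \in upper_cell lam th.
    move=> th; rewrite inE; apply/forallP => v; rewrite /lam.
    have := Hp th (g v); rewrite Hg.
    have -> : p (g (f th)) = p th by apply: Hp_eq; rewrite Hg.
    lra.
  exists lam; apply: comb => O; rewrite Hequiv; exact: indiff_char.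
- case=> lam Hfac.
  pose a0 : alloc m := [ffun => false].
  pose f := fun th : typ R m => [arg max_(v > a0) (dotp th v + lam v)]%O.
  have Hcell : forall th, f th \in upper_cell lam th.
    move=> th; rewrite /f; case: arg_maxP => //= v _ H.
    by rewrite inE; apply/forallP => w; apply: H.
  exists f; split.
    exists (fun th => - lam (f th)) => th th'.
    have H0 := Hcell th; rewrite inE in H0; have := forallP H0 (f th'); lra.
  move=> O; rewrite (indiff_char Hcell); split.
  + move=> IO; have [Y [OY [IY HY]]] := maxl IO.
    have : facet I Y by split.
    move/Hfac => [[c Ec] _]; exists c; by rewrite -Ec.
  + case=> c Hc.
    have [Y [CY [[c' Ec'] HY]]] :=
      maxl (P := is_cell lam) (ex_intro _ c erefl : is_cell lam (upper_cell lam c)).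
    have : maximal_cell lam Y by split => //; exists c'.
    move/Hfac => [IY _]; exact: HIdown _ _ (subset_trans Hc CY) IY.
Qed.
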